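(* Let $\mathbb G=V_1\times V_2$ be a step-two Carnot group and $f\in\mathcal A_h(\mathbb G)$. Then $f$ is $\Sigma$-affine, i.e. for every $(x,z)\in\mathbb G$ and every $(x',z')\in\Sigma$, the map $t\in\mathbb R\mapsto f((x,z)\cdot(tx',tz'))$ is affine.
   Context: A step-two Carnot group is $\mathbb G=V_1\times V_2$, where $V_1,V_2$ are finite-dimensional real vector spaces with $V_2\neq\{0\}$, equipped with a bilinear skew-symmetric map $[\cdot,\cdot]:V_1\times V_1\to V_2$ with $\operatorname{span}\{[x,x']:x,x'\in V_1\}=V_2$, and group law $(x,z)\cdot(x',z')=(x+x',z+z'+[x,x'])$. $\mathcal A_h(\mathbb G)$ is the space of $h$-affine maps $f:\mathbb G\to\mathbb R$, i.e. such that for all $(x,z)\in\mathbb G$, $y\in V_1$, $t\mapsto f((x,z)\cdot(ty,0))$ is affine. For $x,y\in V_1$, $\operatorname{Lie}(x,y):=\operatorname{span}\{x,y\}\times\operatorname{span}\{[x,y]\}\subset\mathbb G$, and $\Sigma:=\bigcup_{x,y\in V_1}\operatorname{Lie}(x,y)$. *)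

(* Defs.v *)
From HB Require Import structures.
From mathcomp Require Import all_boot all_order all_algebra.
From mathcomp Require Import reals.
Set Implicit Arguments. Unset Strict Implicit. Unset Printing Implicit Defensive.
Import Order.TTheory GRing.Theory Num.Theory.
Local Open Scope ring_scope.

Section Carnot.
Variables (R : realType) (n m : nat).
Notation V1 := 'rV[R]_n.
Notation V2 := 'rV[R]_m.
Notation G := (V1 * V2)%type.

Definition bracket_bilinear (br : V1 -> V1 -> V2) : Prop :=
  (forall (a : R) (x y x' : V1), br (a *: x + y) x' = a *: br x x' + br y x') /\
  (forall (a : R) (x x' y' : V1), br x (a *: x' + y') = a *: br x x' + br x y').

Definition bracket_skew (br : V1 -> V1 -> V2) : Prop :=
  forall x y : V1, br x y = - br y x.

Definition bracket_spans (br : V1 -> V1 -> V2) : Prop :=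
  forall z : V2, exists (k : nat) (c : 'I_k -> R) (u v : 'I_k -> V1),
    z = \sum_(i < k) c i *: br (u i) (v i).

Definition gmul (br : V1 -> V1 -> V2) (p q : G) : G :=
  (p.1 + q.1, p.2 + q.2 + br p.1 q.1).

Definition affine_fun (g : R -> R) : Prop :=
  exists a b : R, forall t : R, g t = a * t + b.

Definition h_affine (br : V1 -> V1 -> V2) (f : G -> R) : Prop :=
  forall (p : G) (y : V1), affine_fun (fun t => f (gmul br p (t *: y, 0))).

Definition in_Lie (br : V1 -> V1 -> V2) (x y : V1) (q : G) : Prop :=
  (exists a b : R, q.1 = a *: x + b *: y) /\ (exists c : R, q.2 = c *: br x y).

Definition in_Sigma (br : V1 -> V1 -> V2) (q : G) : Prop :=
  exists x y : V1, in_Lie br x y q.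

Definition Sigma_affine (br : V1 -> V1 -> V2) (f : G -> R) : Prop :=
  forall p q : G, in_Sigma br q ->
    affine_fun (fun t => f (gmul br p (t *: q.1, t *: q.2))).

End Carnot.

(* Main.v *)
Require Import Defs.
From HB Require Import structures.
From mathcomp Require Import all_boot all_order all_algebra.
From mathcomp Require Import reals.
From mathcomp Require Import ring lra.
Import Order.TTheory GRing.Theory Num.Theory.
Local Open Scope ring_scope.


Lemma affine_half {R : realType} (g1 g2 h : R -> R) : affine_fun g1 -> affine_fun g2 ->
  (forall t, h t = (g1 t + g2 t) / 2) -> affine_fun h.
Proof.
move=> [a1 [b1 H1]] [a2 [b2 H2]] H; exists ((a1+a2)/2), ((b1+b2)/2) => t.
rewrite H H1 H2; field; done.
Qed.

Lemma affine_comp {R : realType} (g : R -> R) k : affine_fun g -> affine_fun (fun t => g (k * t)).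
Proof. move=> [a [b H]]; exists (a * k), b => t; rewrite H; ring. Qed.

Lemma affine_mid {R : realType} (g : R -> R) : affine_fun g -> g (-1) = (g 0 + g (-2)) / 2.
Proof. move=> [a [b H]]; rewrite !H; field; done. Qed.

Lemma affine_ext {R : realType} (g h : R -> R) : affine_fun g -> (forall t, h t = g t) -> affine_fun h.
Proof. move=> [a [b H]] E; exists a, b => t; by rewrite E H. Qed.

Section Main.
Variables (R : realType) (n m : nat) (br : 'rV[R]_n -> 'rV[R]_n -> 'rV[R]_m).
Hypothesis Hb : bracket_bilinear br.
Hypothesis Hs : bracket_skew br.

Lemma brDl x y z : br (x + y) z = br x z + br y z.
Proof. by move: (Hb.1 1 x y z); rewrite !scale1r. Qed.
Lemma brDr x y z : br z (x + y) = br z x + br z y.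
Proof. by move: (Hb.2 1 z x y); rewrite !scale1r. Qed.
Lemma br0l z : br 0 z = 0.
Proof. apply: (addrI (br 0 z)); rewrite addr0 -brDl addr0 //. Qed.
Lemma br0r z : br z 0 = 0.
Proof. apply: (addrI (br z 0)); rewrite addr0 -brDr addr0 //. Qed.
Lemma brZl a x z : br (a *: x) z = a *: br x z.
Proof. by move: (Hb.1 a x 0 z); rewrite addr0 br0l addr0. Qed.
Lemma brZr a x z : br z (a *: x) = a *: br z x.
Proof. by move: (Hb.2 a z x 0); rewrite addr0 br0r addr0. Qed.
Lemma brNl x z : br (- x) z = - br x z.
Proof. by rewrite -scaleN1r brZl scaleN1r. Qed.
Lemma brNr x z : br z (- x) = - br z x.
Proof. by rewrite -scaleN1r brZr scaleN1r. Qed.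
Lemma brxx x : br x x = 0.
Proof.
apply/rowP => i; have := congr1 (fun v : 'rV[R]_m => v 0 i) (Hs x x).
rewrite !mxE /= => Hi; lra.
Qed.

Ltac expand := rewrite ?(brDl, brDr, brZl, brZr, brNl, brNr, br0l, br0r, brxx).

Variable f : 'rV[R]_n * 'rV[R]_m -> R.
Hypothesis Hf : h_affine br f.

Lemma vert P x y : affine_fun (fun t => f (gmul br P (0, t *: br x y))).
Proof.
have HA := Hf (gmul br P (x,0)) y.
have HQ := Hf (gmul br P (-x,0)) (-y).
apply: (affine_half _ _ _ HA HQ) => t.
have Hm := affine_mid _ (Hf (gmul br (gmul br P (x,0)) (t*:y,0)) (x + t *: y)).
rewrite /= in Hm.
have e1 : gmul br (gmul br (gmul br P (x,0)) (t*:y,0)) ((-1) *: (x + t *: y), 0)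
   = gmul br P (0, t *: br x y).
  rewrite /gmul /=; congr pair; expand; rewrite ?(Hs y x); apply/rowP => i; rewrite !mxE; ring.
have e0 : gmul br (gmul br (gmul br P (x,0)) (t*:y,0)) (0 *: (x + t *: y), 0)
   = gmul br (gmul br P (x,0)) (t*:y,0).
  rewrite /gmul /=; congr pair; expand; rewrite ?(Hs y x); apply/rowP => i; rewrite !mxE; ring.
have e2 : gmul br (gmul br (gmul br P (x,0)) (t*:y,0)) ((-2) *: (x + t *: y), 0)
   = gmul br (gmul br P (-x,0)) (t*:(-y),0).
  rewrite /gmul /=; congr pair; expand; rewrite ?(Hs y x); apply/rowP => i; rewrite !mxE; ring.
by rewrite e1 e0 e2 in Hm.
Qed.

Lemma gen P v e : affine_fun (fun t => f (gmul br P (t *: v, t *: br (3 *: e) v))).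
Proof.
have HA := affine_comp _ 2 (Hf (gmul br P (e,0)) v).
have HQ := vert (gmul br P (-e,0)) (4 *: e) v.
apply: (affine_half _ _ _ HA HQ) => t.
have Hm := affine_mid _ (Hf (gmul br (gmul br P (e,0)) ((2 * t) *: v,0)) (e + t *: v)).
rewrite /= in Hm.
have e1 : gmul br (gmul br (gmul br P (e,0)) ((2 * t)*:v,0)) ((-1) *: (e + t *: v), 0)
   = gmul br P (t *: v, t *: br (3 *: e) v).
  rewrite /gmul /=; congr pair; expand; rewrite ?(Hs v e); apply/rowP => i; rewrite !mxE; ring.
have e0 : gmul br (gmul br (gmul br P (e,0)) ((2 * t)*:v,0)) (0 *: (e + t *: v), 0)
   = gmul br (gmul br P (e,0)) ((2 * t)*:v,0).
  rewrite /gmul /=; congr pair; expand; rewrite ?(Hs v e); apply/rowP => i; rewrite !mxE; ring.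
have e2 : gmul br (gmul br (gmul br P (e,0)) ((2 * t)*:v,0)) ((-2) *: (e + t *: v), 0)
   = gmul br (gmul br P (-e,0)) (0, t *: br (4 *: e) v).
  rewrite /gmul /=; congr pair; expand; rewrite ?(Hs v e); apply/rowP => i; rewrite !mxE; ring.
by rewrite e1 e0 e2 in Hm.
Qed.
End Main.
Arguments brDl {R n m br} Hb.
Arguments brDr {R n m br} Hb.
Arguments brZl {R n m br} Hb.
Arguments brZr {R n m br} Hb.
Arguments brNl {R n m br} Hb.
Arguments brNr {R n m br} Hb.
Arguments br0l {R n m br} Hb.
Arguments br0r {R n m br} Hb.
Arguments brxx {R n m br} Hs.
Arguments vert {R n m br} Hb Hs {f} Hf.
Arguments gen {R n m br} Hb Hs {f} Hf.

Theorem proposition3p7 (R : realType) (n m : nat)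
  (br : 'rV[R]_n -> 'rV[R]_n -> 'rV[R]_m) :
  (0 < m)%N ->
  bracket_bilinear br -> bracket_skew br -> bracket_spans br ->
  forall f : 'rV[R]_n * 'rV[R]_m -> R,
    h_affine br f -> Sigma_affine br f.
Proof.
move=> _ Hb Hs _ f Hf p [q1 q2] [x [y [[a [b /= Hq1]] [c /= Hq2]]]].
rewrite /= {}Hq1 {}Hq2.
have [a0|a0] := eqVneq a 0.
  subst a; have [b0|b0] := eqVneq b 0.
    subst b; apply: (affine_ext _ _ (vert Hb Hs Hf p (c *: x) y)) => t.
    by rewrite !scale0r add0r scaler0 (brZl Hb).
  apply: (affine_ext _ _ (gen Hb Hs Hf p (0 *: x + b *: y) ((c / (3 * b)) *: x))) => t.
  congr (f (gmul br p (_, _))); congr (_ *: _).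
  rewrite ?(brDl Hb, brDr Hb, brZl Hb, brZr Hb, brNl Hb, brNr Hb, br0l Hb, br0r Hb, brxx Hs).
  apply/rowP => i; rewrite !mxE; by field.
apply: (affine_ext _ _ (gen Hb Hs Hf p (a *: x + b *: y) ((- (c / (3 * a))) *: y))) => t.
congr (f (gmul br p (_, _))); congr (_ *: _).
rewrite ?(brDl Hb, brDr Hb, brZl Hb, brZr Hb, brNl Hb, brNr Hb, br0l Hb, br0r Hb, brxx Hs).
rewrite (Hs y x); apply/rowP => i; rewrite !mxE; by field.
Qed.
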